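(* Let $T\subset\mathbb{R}^2$ be a closed triangle with vertices $A=(x_a,y_a)$, $B=(x_b,y_b)$, $O=(x_o,y_o)$ with $y_a=y_b>y_o$, and let $C$ be a point of the open segment $(A,B)$. Put $T'=T\setminus\{A,B\}$ and $T''=T\setminus(\{A\}\cup[B,C])$, where $[B,C]$ is the closed segment from $B$ to $C$. Then there exists a homeomorphism $f:T'\to T''$ preserving the second coordinate (i.e. $f(x,y)=(f_1(x,y),y)$). In particular $f$ is the identity on the sides $(A,O]$ and $[O,B)$, and $f$ maps the open segment $(A,B)$ onto the open segment $(A,C)$. *)

(* Defs.v *)
From Stdlib Require Import Reals.
Open Scope R_scope.

Definition pt : Type := (R * R)%type.

Definition dist2 (p q : pt) : R :=
  sqrt ((fst p - fst q) ^ 2 + (snd p - snd q) ^ 2).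

Definition cont_on (S : pt -> Prop) (f : pt -> pt) : Prop :=
  forall p, S p -> forall eps, 0 < eps ->
    exists delta, 0 < delta /\
      forall q, S q -> dist2 p q < delta -> dist2 (f p) (f q) < eps.

Definition homeo_on (S S' : pt -> Prop) (f : pt -> pt) : Prop :=
  (forall p, S p -> S' (f p)) /\
  cont_on S f /\
  exists g : pt -> pt,
    (forall q, S' q -> S (g q)) /\
    cont_on S' g /\
    (forall p, S p -> g (f p) = p) /\
    (forall q, S' q -> f (g q) = q).

Definition lerp (P Q : pt) (t : R) : pt :=
  ((1 - t) * fst P + t * fst Q, (1 - t) * snd P + t * snd Q).

Definition in_triangle (A B O X : pt) : Prop :=
  exists a b c, 0 <= a /\ 0 <= b /\ 0 <= c /\ a + b + c = 1 /\
    X = (a * fst A + b * fst B + c * fst O, a * snd A + b * snd B + c * snd O).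

Definition closed_seg (P Q X : pt) : Prop := exists t, 0 <= t <= 1 /\ X = lerp P Q t.
Definition open_seg (P Q X : pt) : Prop := exists t, 0 < t < 1 /\ X = lerp P Q t.
Definition lopen_seg (P Q X : pt) : Prop := exists t, 0 < t <= 1 /\ X = lerp P Q t.

(* Main.v *)
Require Import Defs.
From Stdlib Require Import Reals Lra Psatz.
From Coquelicot Require Import Coquelicot.
Open Scope R_scope.

Lemma abs_le_dist_fst (p q : pt) : Rabs (fst q - fst p) <= dist2 p q.
Proof.
  unfold dist2. rewrite <- sqrt_Rsqr_abs. apply sqrt_le_1_alt.
  unfold Rsqr; simpl. pose proof (Rle_0_sqr (snd p - snd q)); unfold Rsqr in *; nra.
Qed.
Lemma abs_le_dist_snd (p q : pt) : Rabs (snd q - snd p) <= dist2 p q.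
Proof.
  unfold dist2. rewrite <- sqrt_Rsqr_abs. apply sqrt_le_1_alt.
  unfold Rsqr; simpl. pose proof (Rle_0_sqr (fst p - fst q)); unfold Rsqr in *; nra.
Qed.
Lemma dist_le_abs (p q : pt) : dist2 p q <= Rabs (fst p - fst q) + Rabs (snd p - snd q).
Proof.
  unfold dist2.
  assert (H: 0 <= Rabs (fst p - fst q) + Rabs (snd p - snd q)) by
    (pose proof (Rabs_pos (fst p - fst q)); pose proof (Rabs_pos (snd p - snd q)); lra).
  rewrite <- (sqrt_Rsqr _ H). apply sqrt_le_1_alt.
  unfold Rsqr. pose proof (Rabs_pos (fst p - fst q)); pose proof (Rabs_pos (snd p - snd q)).
  replace ((fst p - fst q)^2) with (Rabs (fst p - fst q) * Rabs (fst p - fst q)).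
  2:{ rewrite <- Rabs_mult. rewrite Rabs_right. ring. apply Rle_ge, Rle_0_sqr. }
  replace ((snd p - snd q)^2) with (Rabs (snd p - snd q) * Rabs (snd p - snd q)).
  2:{ rewrite <- Rabs_mult. rewrite Rabs_right. ring. apply Rle_ge, Rle_0_sqr. }
  simpl. clear H. revert H0 H1. generalize (Rabs (fst p - fst q)) (Rabs (snd p - snd q)); intros u v ? ?. nra.
Qed.

Definition ctn (F : pt -> R) (p : pt) := forall eps, 0 < eps -> exists delta, 0 < delta /\
  forall q, dist2 p q < delta -> Rabs (F q - F p) < eps.

Lemma cont_ctn (F : R * R -> R) (p : R * R) : continuous F p -> ctn F p.
Proof.
  intros H eps Heps.
  assert (L : locally (F p) (ball (F p) (mkposreal eps Heps))) by apply locally_ball.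
  specialize (H _ L). destruct H as [d Hd].
  exists d. split; [apply cond_pos|]. intros q Hq.
  assert (B : ball p d q).
  { split; simpl; unfold ball; simpl; unfold AbsRing_ball, abs, minus, plus, opp; simpl.
    - pose proof (abs_le_dist_fst p q). destruct p, q; simpl in *. unfold Rminus in *. lra.
    - pose proof (abs_le_dist_snd p q). destruct p, q; simpl in *. unfold Rminus in *. lra. }
  specialize (Hd q B). revert Hd. unfold ball; simpl; unfold AbsRing_ball, abs, minus, plus, opp; simpl. auto.
Qed.

Lemma c_fst (p : R*R) : continuous (fun q : R*R => fst q) p.
Proof. destruct p; apply continuous_fst. Qed.
Lemma c_snd (p : R*R) : continuous (fun q : R*R => snd q) p.
Proof. destruct p; apply continuous_snd. Qed.
Lemma c_const (k : R) (p : R*R) : continuous (fun q : R*R => k) p.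
Proof. apply continuous_const. Qed.
Lemma c_plus (f g : R*R -> R) p : continuous f p -> continuous g p -> continuous (fun q => f q + g q) p.
Proof. intros. apply (continuous_plus f g p); auto. Qed.
Lemma c_opp (f : R*R -> R) p : continuous f p -> continuous (fun q => - f q) p.
Proof. intros. apply (continuous_opp f p); auto. Qed.
Lemma c_minus (f g : R*R -> R) p : continuous f p -> continuous g p -> continuous (fun q => f q - g q) p.
Proof. intros. apply c_plus; auto. apply c_opp; auto. Qed.
Lemma c_mult (f g : R*R -> R) p : continuous f p -> continuous g p -> continuous (fun q => f q * g q) p.
Proof. intros. apply (continuous_mult f g p); auto. Qed.
Lemma c_inv (f : R*R -> R) p : continuous f p -> f p <> 0 -> continuous (fun q => / f q) p.
Proof. intros. apply (continuous_comp f Rinv); auto.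
  apply continuity_pt_filterlim. apply continuity_pt_inv; auto. apply continuity_pt_id. Qed.
Lemma c_div (f g : R*R -> R) p : continuous f p -> continuous g p -> g p <> 0 -> continuous (fun q => f q / g q) p.
Proof. intros. unfold Rdiv. apply c_mult; auto. apply c_inv; auto. Qed.

Lemma ctn_cont (F : R * R -> R) (p : R * R) : ctn F p -> continuous F p.
Proof.
  intros H P [e He].
  destruct (H e (cond_pos e)) as [d [Hd Hq]].
  exists (mkposreal (d/2) ltac:(lra)). intros q [B1 B2].
  apply He. revert B1 B2. unfold ball; simpl; unfold AbsRing_ball, abs, minus, plus, opp; simpl.
  intros B1 B2. apply Hq. pose proof (dist_le_abs p q).
  rewrite (Rabs_minus_sym (fst p)) in H0. rewrite (Rabs_minus_sym (snd p)) in H0.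
  destruct p, q; simpl in *. unfold Rminus in *. lra.
Qed.

Lemma cont_pos_loc (h : R*R -> R) p : continuous h p -> h p > 0 ->
  locally p (fun q => h q > 0).
Proof.
  intros Hc Hp. apply Hc. exists (mkposreal (h p) Hp). intros y.
  unfold ball; simpl; unfold AbsRing_ball, abs, minus, plus, opp; simpl.
  intros Hy. apply Rabs_lt_between in Hy. lra.
Qed.

Lemma cont_pw (F G1 G2 : R*R -> R) p : continuous G1 p -> continuous G2 p ->
  G1 p = G2 p -> F p = G1 p -> (forall q, F q = G1 q \/ F q = G2 q) -> continuous F p.
Proof.
  intros C1 C2 E1 E2 HF. apply ctn_cont.
  apply cont_ctn in C1. apply cont_ctn in C2.
  intros eps He. destruct (C1 eps He) as [d1 [Hd1 H1]]. destruct (C2 eps He) as [d2 [Hd2 H2]].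
  exists (Rmin d1 d2). split. apply Rmin_pos; auto.
  intros q Hq. pose proof (Rmin_l d1 d2). pose proof (Rmin_r d1 d2).
  destruct (HF q) as [-> | ->]; rewrite E2.
  - apply H1. lra.
  - rewrite E1. apply H2. lra.
Qed.

Lemma c_Rabs (f : R*R -> R) p : continuous f p -> continuous (fun q => Rabs (f q)) p.
Proof. intros. apply (continuous_comp f Rabs); auto.
  apply continuity_pt_filterlim. apply Rcontinuity_abs. Qed.

Lemma c_Rmin (f g : R*R -> R) p : continuous f p -> continuous g p -> continuous (fun q => Rmin (f q) (g q)) p.
Proof.
  intros. apply (continuous_ext (fun q => (f q + g q - Rabs (f q - g q)) / 2)).
  - intros q. unfold Rmin. destruct (Rle_dec (f q) (g q)).
    + rewrite Rabs_left1 by lra. lra.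
    + rewrite Rabs_right by lra. lra.
  - apply c_div. apply c_minus. apply c_plus; auto. apply c_Rabs. apply c_minus; auto.
    apply c_const. lra.
Qed.

Lemma cont_on_of (S : pt -> Prop) (f : pt -> pt) :
  (forall p, S p -> continuous (fun q : R*R => fst (f q)) p /\ continuous (fun q : R*R => snd (f q)) p) ->
  cont_on S f.
Proof.
  intros H p Sp eps He. destruct (H p Sp) as [C1 C2].
  apply cont_ctn in C1. apply cont_ctn in C2.
  destruct (C1 (eps/2) ltac:(lra)) as [d1 [Hd1 H1]]. destruct (C2 (eps/2) ltac:(lra)) as [d2 [Hd2 H2]].
  exists (Rmin d1 d2). split. apply Rmin_pos; auto.
  intros q Sq Hq. pose proof (Rmin_l d1 d2). pose proof (Rmin_r d1 d2).
  pose proof (dist_le_abs (f p) (f q)).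
  specialize (H1 q ltac:(lra)). specialize (H2 q ltac:(lra)).
  rewrite Rabs_minus_sym in H1. rewrite Rabs_minus_sym in H2. lra.
Qed.

Definition Hf (c b s : R) : R := s*c*b - s*(1-s) + (1-s-b)*(1-c+c*s).
Definition G2 (c b s : R) : R := (1-s) - (1-s-b)*(1-c+c*s)/s.
Definition Fm (c b s : R) : R := if Rle_dec 0 (Hf c b s) then c*b else G2 c b s.
Definition K2 (c v s : R) : R := (1-s) - (1-s-v)*s/(1-c+c*s).
Definition Gm (c v s : R) : R := Rmin (v/c) (K2 c v s).

Lemma Hf_G2 c b s : s <> 0 -> Hf c b s = s * (c*b - G2 c b s).
Proof. intros. unfold Hf, G2. field. auto. Qed.

Lemma Hf_s0 c b : Hf c b 0 = (1-b)*(1-c).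
Proof. unfold Hf. ring. Qed.

Lemma K2_s0 c v : c < 1 -> K2 c v 0 = 1.
Proof. intros. unfold K2. field. lra. Qed.

Lemma K2_Hf c b s : 0 < c < 1 -> 0 <= s -> (b <= K2 c (c*b) s <-> 0 <= Hf c b s).
Proof.
  intros Hc Hs. assert (k : 0 < 1-c+c*s) by nra.
  unfold K2, Hf.
  assert (E : K2 c (c*b) s - b = Hf c b s / (1-c+c*s)) by (unfold K2, Hf; field; lra).
  unfold K2, Hf in E. split; intros H.
  - assert (0 <= Hf c b s / (1-c+c*s)) by (unfold Hf; lra). unfold Hf in H0.
    apply Rmult_le_reg_r with (r := / (1-c+c*s)). apply Rinv_0_lt_compat; lra.
    rewrite Rmult_0_l. exact H0.
  - assert (0 <= Hf c b s / (1-c+c*s)). { apply Rdiv_le_0_compat; [exact H| lra]. }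
    unfold Hf in H0. lra.
Qed.

Lemma G2_K2 c v s : 0 < c < 1 -> 0 < s -> G2 c (K2 c v s) s = v.
Proof. intros. unfold G2, K2. field. split; nra. Qed.

Lemma K2_G2 c b s : 0 < c < 1 -> 0 < s -> K2 c (G2 c b s) s = b.
Proof. intros. unfold G2, K2. field. split; nra. Qed.

Lemma L1 c b s : 0 < c < 1 -> 0 <= s -> 0 <= b -> b + s <= 1 -> ~ (b = 0 /\ s = 0) -> ~ (b = 1 /\ s = 0) ->
  0 <= Fm c b s /\ Fm c b s + s <= 1 /\ ~ (Fm c b s = 0 /\ s = 0) /\ ~ (s = 0 /\ c <= Fm c b s <= 1).
Proof.
  intros Hc Hs Hb Hbs N1 N2.
  destruct (Req_dec s 0) as [Es|Ns].
  - subst s. assert (b < 1) by (destruct (Req_dec b 1); [tauto| lra]).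
    assert (b <> 0) by tauto.
    unfold Fm. rewrite Hf_s0. destruct (Rle_dec 0 ((1-b)*(1-c))) as [_|n]; [|exfalso; apply n; nra].
    assert (0 < c*b) by nra. assert (c*b < c) by nra.
    repeat split; try lra; intros [? ?]; lra.
  - assert (sp : 0 < s) by (destruct Hs as [sp|sp]; [exact sp| congruence]).
    unfold Fm. destruct (Rle_dec 0 (Hf c b s)) as [h|h].
    + assert (0 <= c*b) by nra. assert (c*b <= b) by nra. repeat split; try lra; tauto.
    + rewrite Hf_G2 in h by auto.
      assert (c*b < G2 c b s) by nra.
      assert (0 <= (1-s-b)*(1-c+c*s)/s). { apply Rdiv_le_0_compat; [apply Rmult_le_pos|]; nra. }
      assert (0 <= c*b) by nra.
      unfold G2 in *. repeat split; try lra; tauto.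
Qed.

Lemma L2 c v s : 0 < c < 1 -> 0 <= s -> 0 <= v -> v + s <= 1 -> ~ (v = 0 /\ s = 0) -> ~ (s = 0 /\ c <= v <= 1) ->
  0 <= Gm c v s /\ Gm c v s + s <= 1 /\ ~ (Gm c v s = 0 /\ s = 0) /\ ~ (Gm c v s = 1 /\ s = 0).
Proof.
  intros Hc Hs Hv Hvs N1 N2.
  destruct (Req_dec s 0) as [Es|Ns].
  - subst s. assert (v < c) by (destruct (Rle_dec c v); [exfalso; apply N2; lra| lra]).
    assert (v <> 0) by tauto.
    unfold Gm. rewrite K2_s0 by lra.
    assert (v / c < 1). { apply Rmult_lt_reg_r with c; [lra|]. unfold Rdiv. rewrite Rmult_assoc, Rinv_l; lra. }
    assert (0 < v / c). { apply Rdiv_lt_0_compat; lra. }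
    rewrite Rmin_left by lra. repeat split; try lra; intros [? ?]; lra.
  - assert (k : 0 < 1-c+c*s) by nra.
    assert (0 <= v / c) by (apply Rdiv_le_0_compat; lra).
    assert (E : K2 c v s - v = (1-s-v)*(1-c)*(1-s)/(1-c+c*s)) by (unfold K2; field; lra).
    assert (0 <= (1-s-v)*(1-c)*(1-s)/(1-c+c*s)). { apply Rdiv_le_0_compat; [|lra].
      apply Rmult_le_pos; [apply Rmult_le_pos|]; lra. }
    assert (0 <= (1-s-v)*s/(1-c+c*s)). { apply Rdiv_le_0_compat; [|lra]. apply Rmult_le_pos; lra. }
    assert (K2 c v s <= 1 - s) by (unfold K2; lra).
    pose proof (Rmin_l (v/c) (K2 c v s)). pose proof (Rmin_r (v/c) (K2 c v s)).
    unfold Gm. repeat split.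
    + apply Rmin_glb; lra.
    + lra.
    + tauto.
    + tauto.
Qed.

Lemma L3 c b s : 0 < c < 1 -> 0 <= s -> 0 <= b -> b + s <= 1 -> ~ (b = 1 /\ s = 0) ->
  Gm c (Fm c b s) s = b.
Proof.
  intros Hc Hs Hb Hbs N2. unfold Fm, Gm. destruct (Rle_dec 0 (Hf c b s)) as [h|h].
  - apply K2_Hf in h; auto. replace (c*b/c) with b by (field; lra). apply Rmin_left; auto.
  - destruct (Req_dec s 0) as [Es|Ns].
    + subst s. rewrite Hf_s0 in h. exfalso. apply h.
      assert (b < 1) by (destruct (Req_dec b 1); [tauto|lra]). nra.
    + rewrite Hf_G2 in h by auto. assert (c*b < G2 c b s) by nra.
      rewrite K2_G2 by lra. apply Rmin_right.
      assert (b < G2 c b s / c). { apply Rmult_lt_reg_r with c; [lra|]. unfold Rdiv. rewrite Rmult_assoc, Rinv_l; lra. }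
      lra.
Qed.

Lemma L4 c v s : 0 < c < 1 -> 0 <= s -> 0 <= v -> v + s <= 1 -> ~ (s = 0 /\ c <= v <= 1) ->
  Fm c (Gm c v s) s = v.
Proof.
  intros Hc Hs Hv Hvs N2. unfold Gm, Rmin. destruct (Rle_dec (v/c) (K2 c v s)) as [h|h].
  - unfold Fm. replace v with (c * (v/c)) in h at 2 by (field; lra).
    apply K2_Hf in h; auto. destruct (Rle_dec 0 (Hf c (v/c) s)); [|tauto]. field. lra.
  - destruct (Req_dec s 0) as [Es|Ns].
    + subst s. rewrite K2_s0 in h by lra. exfalso. apply N2. split; auto. split; [|lra].
      destruct (Rle_dec c v); auto. exfalso. apply h.
      apply Rmult_le_reg_r with c; [lra|]. unfold Rdiv. rewrite Rmult_assoc, Rinv_l; lra.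
    + assert (sp : 0 < s) by lra.
      unfold Fm. rewrite Hf_G2 by auto. rewrite G2_K2 by lra.
      assert (c * K2 c v s < v). { apply Rnot_le_lt in h.
        apply Rmult_lt_compat_l with (r := c) in h; [|lra]. unfold Rdiv in h.
        replace (c * (v * / c)) with v in h by (field; lra). lra. }
      destruct (Rle_dec 0 (s * (c * K2 c v s - v))) as [h2|h2].
      * exfalso. nra.
      * reflexivity.
Qed.

Lemma L5 c s : 0 < c < 1 -> 0 < s <= 1 -> Fm c 0 s = 0.
Proof. intros. unfold Fm. destruct (Rle_dec 0 (Hf c 0 s)) as [h|h]. ring.
  exfalso. apply h. unfold Hf. replace (s * c * 0 - s * (1 - s) + (1 - s - 0) * (1 - c + c * s)) with ((1-s)*(1-s)*(1-c)) by ring.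
  apply Rmult_le_pos; [apply Rle_0_sqr | lra]. Qed.

Lemma L6 c s : 0 < c < 1 -> 0 < s <= 1 -> Fm c (1-s) s = 1-s.
Proof. intros. unfold Fm. destruct (Rle_dec 0 (Hf c (1-s) s)) as [h|h].
  - unfold Hf in h. replace (s * c * (1 - s) - s * (1 - s) + (1 - s - (1 - s)) * (1 - c + c * s)) with (- (s*(1-s)*(1-c))) in h by ring.
    assert (0 <= s*(1-s)*(1-c)) by (apply Rmult_le_pos; [apply Rmult_le_pos|]; lra).
    assert (E: s*(1-s)*(1-c) = 0) by lra. apply Rmult_integral in E. destruct E as [E|E]; [|lra].
    apply Rmult_integral in E. destruct E as [E|E]; [lra|]. replace s with 1 by lra. ring.
  - unfold G2. field. lra. Qed.

Lemma L7 c b : 0 < c < 1 -> 0 < b < 1 -> Fm c b 0 = c * b.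
Proof. intros. unfold Fm. rewrite Hf_s0. destruct (Rle_dec 0 ((1-b)*(1-c))) as [h|h]. auto.
  exfalso. apply h. nra. Qed.

Lemma cont_Fm (c : R) (bf sf : R*R -> R) p : 0 < c < 1 ->
  continuous bf p -> continuous sf p -> (sf p = 0 -> bf p < 1) ->
  continuous (fun q => Fm c (bf q) (sf q)) p.
Proof.
  intros Hc Cb Cs Hp.
  assert (CH : continuous (fun q => Hf c (bf q) (sf q)) p).
  { unfold Hf. repeat first [apply c_plus | apply c_minus | apply c_mult | apply c_opp | apply c_const | assumption]. }
  assert (C1 : continuous (fun q => c * bf q) p) by (apply c_mult; [apply c_const|auto]).
  destruct (Rtotal_order (Hf c (bf p) (sf p)) 0) as [Hn|[Hz|Hpos]].
  - assert (Ns : sf p <> 0). { intros E. rewrite E, Hf_s0 in Hn. specialize (Hp E). nra. }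
    assert (C2 : continuous (fun q => G2 c (bf q) (sf q)) p).
    { unfold G2. apply c_minus. apply c_minus; [apply c_const|auto]. apply c_div; auto.
      apply c_mult. apply c_minus; [apply c_minus; [apply c_const|auto]|auto].
      apply c_plus. apply c_minus; apply c_const. apply c_mult; [apply c_const|auto]. }
    apply continuous_ext_loc with (g := fun q => G2 c (bf q) (sf q)); auto.
    assert (L := cont_pos_loc (fun q => - Hf c (bf q) (sf q)) p (c_opp _ _ CH) ltac:(lra)).
    destruct L as [e He]. exists e. intros y Hy. specialize (He y Hy). simpl in He.
    unfold Fm. destruct (Rle_dec 0 (Hf c (bf y) (sf y))); auto. lra.
  - assert (Ns : sf p <> 0). { intros E. rewrite E, Hf_s0 in Hz. specialize (Hp E). nra. }
    assert (C2 : continuous (fun q => G2 c (bf q) (sf q)) p).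
    { unfold G2. apply c_minus. apply c_minus; [apply c_const|auto]. apply c_div; auto.
      apply c_mult. apply c_minus; [apply c_minus; [apply c_const|auto]|auto].
      apply c_plus. apply c_minus; apply c_const. apply c_mult; [apply c_const|auto]. }
    apply (cont_pw _ _ _ p C1 C2).
    + rewrite Hf_G2 in Hz by auto. apply Rmult_integral in Hz. destruct Hz; [tauto|lra].
    + unfold Fm. destruct (Rle_dec 0 (Hf c (bf p) (sf p))); auto. lra.
    + intros q. unfold Fm. destruct (Rle_dec 0 (Hf c (bf q) (sf q))); auto.
  - apply continuous_ext_loc with (g := fun q => c * bf q); auto.
    assert (L := cont_pos_loc (fun q => Hf c (bf q) (sf q)) p CH ltac:(lra)).
    destruct L as [e He]. exists e. intros y Hy. specialize (He y Hy). simpl in He.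
    unfold Fm. destruct (Rle_dec 0 (Hf c (bf y) (sf y))); auto. lra.
Qed.

Lemma cont_Gm (c : R) (bf sf : R*R -> R) p : 0 < c < 1 ->
  continuous bf p -> continuous sf p -> 0 <= sf p ->
  continuous (fun q => Gm c (bf q) (sf q)) p.
Proof.
  intros Hc Cb Cs Hp. unfold Gm. apply c_Rmin.
  - apply c_div; auto. apply c_const. lra.
  - unfold K2. apply c_minus. apply c_minus; [apply c_const|auto]. apply c_div.
    apply c_mult; auto. apply c_minus; [apply c_minus; [apply c_const|auto]|auto].
    apply c_plus. apply c_minus; apply c_const. apply c_mult; [apply c_const|auto].
    nra.
Qed.

Definition sX (ya yo : R) (X : pt) : R := (ya - snd X) / (ya - yo).
Definition bX (xa xb xo ya yo : R) (X : pt) : R := (fst X - xa - sX ya yo X * (xo - xa)) / (xb - xa).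
Definition emb (xa xb xo ya yo b s : R) : pt := (xa + b*(xb-xa) + s*(xo-xa), ya - s*(ya-yo)).


Lemma sX_emb xa xb xo ya yo b s : yo < ya -> sX ya yo (emb xa xb xo ya yo b s) = s.
Proof. intros. unfold sX, emb; simpl. field. lra. Qed.

Lemma bX_emb xa xb xo ya yo b s : xa <> xb -> yo < ya -> bX xa xb xo ya yo (emb xa xb xo ya yo b s) = b.
Proof. intros. unfold bX. rewrite sX_emb by auto. unfold emb; simpl. field. intro. apply H. lra. Qed.

Lemma emb_bX xa xb xo ya yo X : xa <> xb -> yo < ya -> X = emb xa xb xo ya yo (bX xa xb xo ya yo X) (sX ya yo X).
Proof. intros. destruct X as [x y]. unfold emb, bX, sX; simpl. f_equal; field; repeat split; intro; lra. Qed.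

Lemma emb_inj xa xb xo ya yo b s b' s' : xa <> xb -> yo < ya ->
  emb xa xb xo ya yo b s = emb xa xb xo ya yo b' s' -> b = b' /\ s = s'.
Proof. intros H1 H2 E. split.
  - rewrite <- (bX_emb xa xb xo ya yo b s), <- (bX_emb xa xb xo ya yo b' s'); auto. rewrite E; auto.
  - rewrite <- (sX_emb xa xb xo ya yo b s), <- (sX_emb xa xb xo ya yo b' s'); auto. rewrite E; auto.
Qed.

Lemma tri_iff xa xb xo ya yo b s : xa <> xb -> yo < ya ->
  (in_triangle (xa, ya) (xb, ya) (xo, yo) (emb xa xb xo ya yo b s) <-> (0 <= s /\ 0 <= b /\ b + s <= 1)).
Proof.
  intros H1 H2. split.
  - intros [a [b' [c' [Ha [Hb [Hc [Hs E]]]]]]]. simpl in E.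
    assert (E' : emb xa xb xo ya yo b s = emb xa xb xo ya yo b' c').
    { rewrite E. unfold emb. f_equal; replace a with (1 - b' - c') by lra; ring. }
    apply emb_inj in E'; auto. destruct E'; subst. lra.
  - intros [Hs [Hb Hbs]]. exists (1 - b - s), b, s. repeat split; try lra.
    unfold emb; simpl. f_equal; ring.
Qed.

Lemma A_emb xa xb xo ya yo : (xa, ya) = emb xa xb xo ya yo 0 0.
Proof. unfold emb. f_equal; ring. Qed.

Lemma cseg_iff xa xb xo ya yo t v s : xa <> xb -> yo < ya -> t < 1 ->
  (closed_seg (xb, ya) (emb xa xb xo ya yo t 0) (emb xa xb xo ya yo v s) <-> (s = 0 /\ t <= v <= 1)).
Proof.
  intros H1 H2 Ht. split.
  - intros [tau [Htau E]].
    assert (E' : emb xa xb xo ya yo v s = emb xa xb xo ya yo (1 - tau + tau * t) 0).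
    { rewrite E. unfold lerp, emb; simpl. f_equal; ring. }
    apply emb_inj in E'; auto. destruct E' as [-> ->]. split; auto. nra.
  - intros [-> [Hv1 Hv2]]. exists ((1 - v)/(1 - t)). split.
    + split. apply Rdiv_le_0_compat; lra.
      apply Rmult_le_reg_r with (1 - t); [lra|]. unfold Rdiv. rewrite Rmult_assoc, Rinv_l; lra.
    + unfold lerp, emb; simpl. f_equal; field; lra.
Qed.

Lemma c_sX ya yo p : yo < ya -> continuous (sX ya yo) p.
Proof. intros. unfold sX. apply (c_div (fun q => ya - snd q) (fun _ => ya - yo)).
  apply c_minus. apply c_const. apply c_snd. apply c_const. lra. Qed.

Lemma c_bX xa xb xo ya yo p : xa <> xb -> yo < ya -> continuous (bX xa xb xo ya yo) p.
Proof. intros. unfold bX. apply (c_div (fun q => fst q - xa - sX ya yo q * (xo - xa)) (fun _ => xb - xa)).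
  apply c_minus. apply c_minus. apply c_fst. apply c_const. apply c_mult. apply c_sX; auto. apply c_const.
  apply c_const. intro. apply H. lra. Qed.

Lemma c_emb xa xb xo ya yo (vf sf : R*R -> R) p : continuous vf p -> continuous sf p ->
  continuous (fun q => fst (emb xa xb xo ya yo (vf q) (sf q))) p /\
  continuous (fun q => snd (emb xa xb xo ya yo (vf q) (sf q))) p.
Proof. intros. unfold emb; simpl. split.
  - apply c_plus. apply c_plus. apply c_const. apply c_mult; auto. apply c_const. apply c_mult; auto. apply c_const.
  - apply c_minus. apply c_const. apply c_mult; auto. apply c_const.
Qed.

Theorem mainTheorem4 (xa ya xb yb xo yo : R) (C : pt) :
  xa <> xb -> ya = yb -> yo < ya ->
  open_seg (xa, ya) (xb, yb) C ->
  let A : pt := (xa, ya) in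
  let B : pt := (xb, yb) in
  let O : pt := (xo, yo) in
  let T' := fun X : pt => in_triangle A B O X /\ X <> A /\ X <> B in
  let T'' := fun X : pt => in_triangle A B O X /\ X <> A /\ ~ closed_seg B C X in
  exists f : pt -> pt,
    homeo_on T' T'' f /\
    (forall X, T' X -> snd (f X) = snd X) /\
    (forall X, lopen_seg A O X -> f X = X) /\
    (forall X, lopen_seg B O X -> f X = X) /\
    (forall X, open_seg A B X -> open_seg A C (f X)) /\
    (forall Y, open_seg A C Y -> exists X, open_seg A B X /\ f X = Y).
Proof.
  intros Hx Hy Hyo [t [Ht HC]]. cbv zeta.
  subst yb.
  assert (HC' : C = emb xa xb xo ya yo t 0) by (rewrite HC; unfold lerp, emb; simpl; f_equal; ring).
  clear HC. subst C.
  assert (B_emb : (xb, ya) = emb xa xb xo ya yo 1 0) by (unfold emb; f_equal; ring).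
  set (e := emb xa xb xo ya yo).
  set (bb := bX xa xb xo ya yo).
  set (ss := sX ya yo).
  assert (Hbe : forall b s, bb (e b s) = b) by (intros; apply bX_emb; auto).
  assert (Hse : forall b s, ss (e b s) = s) by (intros; apply sX_emb; auto).
  assert (Hdec : forall X, X = e (bb X) (ss X)) by (intros; apply emb_bX; auto).
  assert (Hinj : forall b s b' s', e b s = e b' s' -> b = b' /\ s = s') by (intros; eapply emb_inj; eauto).
  assert (Htri : forall b s, in_triangle (xa, ya) (xb, ya) (xo, yo) (e b s) <-> (0 <= s /\ 0 <= b /\ b + s <= 1))
    by (intros; apply tri_iff; auto).
  assert (Hcs : forall v s, closed_seg (xb, ya) (e t 0) (e v s) <-> (s = 0 /\ t <= v <= 1))
    by (intros; apply cseg_iff; auto; lra).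
  rewrite A_emb with (xa := xa) (ya := ya) (xb := xb) (xo := xo) (yo := yo) in Htri |- *. fold e in Htri |- *.
  rewrite B_emb in Htri, Hcs |- *. fold e in Htri, Hcs |- *.
  assert (T1c : forall b s, (in_triangle (e 0 0) (e 1 0) (xo, yo) (e b s) /\ e b s <> e 0 0 /\ e b s <> e 1 0) <->
     (0 <= s /\ 0 <= b /\ b + s <= 1 /\ ~ (b = 0 /\ s = 0) /\ ~ (b = 1 /\ s = 0))).
  { intros b s. rewrite Htri. split.
    - intros [[? [? ?]] [N1 N2]]. repeat split; auto; intros [-> ->]; auto.
    - intros [? [? [? [N1 N2]]]]. repeat split; auto; intro E; apply Hinj in E; tauto. }
  assert (T2c : forall v s, (in_triangle (e 0 0) (e 1 0) (xo, yo) (e v s) /\ e v s <> e 0 0 /\ ~ closed_seg (e 1 0) (e t 0) (e v s)) <->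
     (0 <= s /\ 0 <= v /\ v + s <= 1 /\ ~ (v = 0 /\ s = 0) /\ ~ (s = 0 /\ t <= v <= 1))).
  { intros v s. rewrite Htri, Hcs. split.
    - intros [[? [? ?]] [N1 N2]]. repeat split; auto; intros [-> ->]; auto.
    - intros [? [? [? [N1 N2]]]]. repeat split; auto; intro E; apply Hinj in E; tauto. }
  exists (fun X => e (Fm t (bb X) (ss X)) (ss X)).
  split; [|split; [|split; [|split; [|split]]]].
  -
    split; [|split].
    + intros X HX. rewrite (Hdec X) in HX. apply T1c in HX. apply T2c.
      destruct HX as [? [? [? [? ?]]]]. pose proof (L1 t _ _ Ht H H0 H1 H2 H3). tauto.
    + apply cont_on_of. intros p Hp. rewrite (Hdec p) in Hp. apply T1c in Hp.
      apply c_emb. apply cont_Fm; auto. apply c_bX; auto. apply c_sX; auto.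
      intros E. change (ss p = 0) in E. change (bb p < 1). destruct Hp as [? [? [? [? N]]]]. destruct (Req_dec (bb p) 1); [tauto|]. lra.
      apply c_sX; auto.
    + exists (fun Y => e (Gm t (bb Y) (ss Y)) (ss Y)). split; [|split; [|split]].
      * intros Y HY. rewrite (Hdec Y) in HY. apply T2c in HY. apply T1c.
        destruct HY as [? [? [? [? ?]]]]. pose proof (L2 t _ _ Ht H H0 H1 H2 H3). tauto.
      * apply cont_on_of. intros p Hp. rewrite (Hdec p) in Hp. apply T2c in Hp.
        apply c_emb. apply cont_Gm; auto. apply c_bX; auto. apply c_sX; auto.
        fold ss. tauto. apply c_sX; auto.
      * intros X HX. rewrite (Hdec X) in HX. apply T1c in HX. rewrite Hbe, Hse.
        rewrite L3; try tauto. symmetry. apply Hdec.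
      * intros Y HY. rewrite (Hdec Y) in HY. apply T2c in HY. rewrite Hbe, Hse.
        rewrite L4; try tauto. symmetry. apply Hdec.
  - intros X _. unfold e, emb, ss, sX; simpl. field. lra.
  - intros X [tau [Htau E]].
    assert (E' : X = e 0 tau) by (rewrite E; unfold e, lerp, emb; simpl; f_equal; ring).
    rewrite E'. rewrite Hbe, Hse, L5; auto.
  - intros X [tau [Htau E]].
    assert (E' : X = e (1 - tau) tau) by (rewrite E; unfold e, lerp, emb; simpl; f_equal; ring).
    rewrite E'. rewrite Hbe, Hse, L6; auto.
  - intros X [tau [Htau E]].
    assert (E' : X = e tau 0) by (rewrite E; unfold e, lerp, emb; simpl; f_equal; ring).
    rewrite E'. rewrite Hbe, Hse, L7; auto. exists tau. split; auto.
    unfold e, lerp, emb; simpl. f_equal; ring.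
  - intros Y [sig [Hsig E]].
    assert (E' : Y = e (sig * t) 0) by (rewrite E; unfold e, lerp, emb; simpl; f_equal; ring).
    rewrite E'. exists (e sig 0). split.
    + exists sig. split; auto. unfold e, lerp, emb; simpl. f_equal; ring.
    + rewrite Hbe, Hse, L7; auto. f_equal. ring.
Qed.
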